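(* For every $n\geq 1$, the Fibonacci-sum set-graph $G^F_{A^{(n)}}$ is Eulerian.
   Context: Let $\mathcal{F}=\{f_m\}_{m\ge 0}$ be the Fibonacci numbers, $f_0=0$, $f_1=1$, $f_m=f_{m-1}+f_{m-2}$. The Fibonacci-sum set-graph $G^F_{A^{(n)}}$ is the multigraph (loops and multiple edges allowed) whose vertices are in bijection with the nonempty subsets of $A^{(n)}=\{1,\dots,n\}$; between the vertices corresponding to distinct subsets $S,T$ there is one edge for each pair $(i',j')$ with $i'\in S$, $j'\in T$, $i'\neq j'$ and $i'+j'\in\mathcal{F}$, and at the vertex corresponding to $S$ there is one loop for each pair of distinct elements $i',j'\in S$ with $i'+j'\in\mathcal{F}$. *)

(* Defs.v *)
From mathcomp Require Import all_boot.
Set Implicit Arguments. Unset Strict Implicit. Unset Printing Implicit Defensive.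

Fixpoint fib (m : nat) : nat :=
  match m with
  | 0 => 0
  | 1 => 1
  | (k.+1 as k1).+1 => fib k1 + fib k
  end.

Definition in_fib (m : nat) : Prop := exists k, fib k = m.

(* Vertices of G^F_{A^(n)}: nonempty subsets of A^(n) = {1,...,n}.
   We encode A^(n) by the ordinal type 'I_n, the ordinal i standing for the
   number i.+1; so a vertex is a nonempty S : {set 'I_n}.

   Edges are described via "darts" (half-edges with an orientation):
   a dart is a quadruple (S, T, i, j) with S, T nonempty, i \in S, j \in T,
   i <> j and (i.+1) + (j.+1) \in F.  S = T is allowed (loops).
   The reversal (T, S, j, i) of a dart is again a dart and is different from
   it (since i <> j).  Each edge of the multigraph corresponds to exactly one
   unordered pair {d, rev d} of darts:
   - for S <> T, the edges between S and T (one per pair (i',j') in S x T,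
     i' <> j', i'+j' in F) are the pairs {(S,T,i,j),(T,S,j,i)};
   - for the loops at S (one per pair of distinct elements i', j' of S with
     i'+j' in F) they are the pairs {(S,S,i,j),(S,S,j,i)}. *)
Definition dart (n : nat) := ({set 'I_n} * {set 'I_n} * 'I_n * 'I_n)%type.

Definition dtail n (d : dart n) : {set 'I_n} := d.1.1.1.
Definition dhead n (d : dart n) : {set 'I_n} := d.1.1.2.
Definition drev n (d : dart n) : dart n := (d.1.1.2, d.1.1.1, d.2, d.1.2).

Definition is_dart n (d : dart n) : Prop :=
  let: (A, B, i, j) := d in
  [/\ A != set0, B != set0, i \in A, j \in B &
      (i != j /\ in_fib (i.+1 + j.+1))].

(* An Eulerian circuit of G^F_{A^(n)}: a closed walk, given as a cyclic
   sequence of darts (the head of each dart is the tail of the next one,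
   cyclically), traversing every edge exactly once, i.e. for every dart d
   the darts d and rev d together occur exactly once in the sequence. *)
Definition euler_circuit n (s : seq (dart n)) : Prop :=
  [/\ forall d, d \in s -> is_dart d,
      cycle (fun d e => dhead d == dtail e) s &
      forall d, is_dart d -> count_mem d s + count_mem (drev d) s = 1].

Definition fib_set_graph_eulerian (n : nat) : Prop :=
  exists s : seq (dart n), euler_circuit s.

(* Main.v *)
Require Import Defs.
From mathcomp Require Import all_boot zify.
Set Implicit Arguments. Unset Strict Implicit. Unset Printing Implicit Defensive.

Definition adj n (d e : dart n) := dhead d == dtail e.

Lemma drevK n : involutive (@drev n).
Proof. by case=> [[[A B] i] j]. Qed.
Lemma drev_inj n : injective (@drev n).
Proof. exact: can_inj (@drevK n). Qed.
Lemma dtail_rev n (d : dart n) : dtail (drev d) = dhead d.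
Proof. by case: d => [[[A B] i] j]. Qed.

Lemma fib_ge k : k <= fib k.+1.
Proof.
have: k <= fib k.+1 /\ k.+1 <= fib k.+2 /\ 0 < fib k.+1.
  elim: k => [|k [h1 [h2 h3]]]; first by [].
  have -> : fib k.+3 = fib k.+2 + fib k.+1 by [].
  lia.
by case.
Qed.

Definition fibb m := has (fun k => fib k == m) (iota 0 m.+2).
Lemma fibbP m : reflect (in_fib m) (fibb m).
Proof.
apply: (iffP hasP) => [[k _ /eqP <-]|[k <-]]; first by exists k.
exists k => //; rewrite mem_iota /= add0n ltnS.
case: k => [|k] //; rewrite ltnS; exact: fib_ge.
Qed.

Definition Eb n (d : dart n) : bool :=
  let: (A, B, i, j) := d in
  [&& A != set0, B != set0, i \in A, j \in B & (i != j) && fibb (i.+1 + j.+1)].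

Lemma EbP n (d : dart n) : reflect (is_dart d) (Eb d).
Proof.
case: d => [[[A B] i] j] /=.
apply: (iffP and5P) => [[h1 h2 h3 h4 /andP[h5 /fibbP h6]]|[h1 h2 h3 h4 [h5 /fibbP h6]]]; split => //.
by rewrite h5.
Qed.

Lemma Eb_rev n (d : dart n) : Eb (drev d) = Eb d.
Proof.
case: d => [[[A B] i] j] /=; rewrite addnC [j == i]eq_sym.
by apply/idP/idP => /and5P[h1 h2 h3 h4 h5]; apply/and5P; split.
Qed.

Lemma Eb_neq n (d : dart n) : Eb d -> drev d != d.
Proof.
case: d => [[[A B] i] j] /= /and5P[_ _ _ _ /andP[/eqP h _]].
by apply/eqP => -[_ _ hji _]; apply: h.
Qed.

Arguments Eb : simpl never.

Definition covered n (s : seq (dart n)) d := d \in s ++ map (@drev n) s.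
Definition trail n (s : seq (dart n)) := uniq (s ++ map (@drev n) s).

Lemma covered_rev n (s : seq (dart n)) d : covered s (drev d) = covered s d.
Proof.
have h : (d \in map (@drev n) s) = (drev d \in s).
  by rewrite -{1}(drevK d) (mem_map (@drev_inj n)).
by rewrite /covered !mem_cat (mem_map (@drev_inj n)) h orbC.
Qed.

Lemma card_uniq_count (T : finType) (P : pred T) (s : seq T) :
  uniq s -> #|[pred x | P x && (x \in s)]| = count P s.
Proof.
move=> us; rewrite -size_filter -(card_uniqP (filter_uniq P us)).
by apply: eq_card => x; rewrite !inE mem_filter.
Qed.

Lemma path_count n w (x0 : dart n) p : path (@adj n) x0 p ->
  count (fun d => dtail d == w) (x0 :: p) + (dhead (last x0 p) == w)
  = (dtail x0 == w) + count (fun d => dhead d == w) (x0 :: p).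
Proof.
elim: p x0 => [|y p IH] x0 /=; first by rewrite !addn0 addnC.
move=> /andP[/eqP hxy hp]; have := IH y hp => /=; rewrite hxy; lia.
Qed.

Lemma cycle_count n w (s : seq (dart n)) : cycle (@adj n) s ->
  count (fun d => dtail d == w) s = count (fun d => dhead d == w) s.
Proof.
case: s => [//|x p] /=; rewrite rcons_path => /andP[hp /eqP hl].
have := path_count w hp; rewrite hl /=; lia.
Qed.

Lemma covered_count n w (s : seq (dart n)) : trail s ->
  #|[pred d | (dtail d == w) && covered s d]| =
  count (fun d => dtail d == w) s + count (fun d => dhead d == w) s.
Proof.
move=> ts; rewrite card_uniq_count // count_cat count_map; congr (_ + _).
Qed.

Lemma even_inv (T : finType) (P : pred T) (f : T -> T) :
  involutive f -> (forall x, P x -> P (f x)) -> (forall x, P x -> f x != x) ->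
  ~~ odd #|P|.
Proof.
move=> fK Pf Pn; have finj := can_inj fK.
set A := [set x | P x].
set B := [set x in A | enum_rank x < enum_rank (f x)].
have BA : B \subset A by apply/subsetP => x; rewrite inE => /andP[].
have HD : A :\: B = f @: B.
  apply/setP => x; rewrite !inE; apply/idP/imsetP.
  - move=> /andP[xB xA]; exists (f x); last by rewrite fK.
    move: xB xA; rewrite !inE => xB Px; rewrite fK (Pf _ Px) /=.
    rewrite Px /= -leqNgt in xB; rewrite ltn_neqAle xB andbT.
    apply/negP => /eqP /ord_inj /enum_rank_inj h.
    by move: (Pn _ Px); rewrite h eqxx.
  - move=> [y]; rewrite !inE => /andP[Py hy] ->; rewrite (Pf _ Py) fK andbT.
    by rewrite -leqNgt ltnW.
have : #|A| = #|B| + #|B|.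
  by rewrite -(cardsID B A) (setIidPr BA) HD card_imset.
have -> : #|P| = #|A| by apply: eq_card => x; rewrite inE.
by move=> ->; rewrite addnn odd_double.
Qed.

Definition tog n (B : {set 'I_n}) (k : 'I_n) := [set x | (x \in B) != (x == k)].
Lemma togK n (B : {set 'I_n}) k : tog (tog B k) k = B.
Proof. by apply/setP => x; rewrite !inE; case: (x \in B); case: (x == k). Qed.

Definition kk n' (j : 'I_n'.+2) : 'I_n'.+2 := if j == ord0 then ord_max else ord0.
Lemma kk_neq n' (j : 'I_n'.+2) : kk j != j.
Proof.
rewrite /kk; have [->|h] := eqVneq j ord0; last by rewrite eq_sym.
by [].
Qed.

Definition fl n' (d : dart n'.+2) : dart n'.+2 :=
  (d.1.1.1, tog d.1.1.2 (kk d.2), d.1.2, d.2).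

Lemma Edeg_even n' (w : {set 'I_n'.+2}) :
  ~~ odd #|[pred d : dart n'.+2 | Eb d && (dtail d == w)]|.
Proof.
apply: (@even_inv _ _ (@fl n')).
- by case=> [[[A B] i] j]; rewrite /fl /= togK.
- case=> [[[A B] i] j]; rewrite /fl /dtail /= => /andP[/and5P[h1 h2 h3 h4 h5] ->].
  rewrite andbT; apply/and5P; split => //; last by rewrite inE h4 [j == _]eq_sym (negbTE (kk_neq j)).
  by apply/set0Pn; exists j; rewrite inE h4 [j == _]eq_sym (negbTE (kk_neq j)).
- case=> [[[A B] i] j] _; rewrite /fl /=; apply/eqP => -[].
  move/setP => /(_ (kk j)); rewrite inE eqxx; by case: (kk j \in B).
Qed.

Lemma covered_U n (U : pred (dart n)) q d : (forall d, U d -> U (drev d)) ->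
  all U q -> covered q d -> U d.
Proof.
move=> Ur /allP hq; rewrite /covered mem_cat => /orP[/hq //|/mapP[e /hq he ->]].
exact: Ur.
Qed.

Lemma trail_rcons n (q : seq (dart n)) d : trail q -> ~~ covered q d -> drev d != d ->
  trail (rcons q d).
Proof.
move=> tq nc nd; rewrite /trail map_rcons.
have pm : perm_eq (rcons q d ++ rcons (map (@drev n) q) (drev d))
                  (d :: drev d :: (q ++ map (@drev n) q)).
  apply/permP => P; rewrite -!cats1 !count_cat /= count_cat; lia.
rewrite (perm_uniq pm) /= in_cons negb_or eq_sym nd.
have nc' := nc; rewrite -covered_rev in nc'.
by rewrite /covered in nc nc'; rewrite nc nc'; exact: tq.
Qed.

Lemma trail_size n (q : seq (dart n)) : trail q -> size q <= #|{: dart n}|.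
Proof.
rewrite /trail cat_uniq => /and3P[uq _ _]; rewrite -(card_uniqP uq); exact: max_card.
Qed.


Lemma extend_step n (U : pred (dart n)) d0 p :
  (forall d, U d -> U (drev d)) -> (forall d, U d -> drev d != d) ->
  (forall w, ~~ odd #|[pred d | U d && (dtail d == w)]|) ->
  path (@adj n) d0 p -> all U (d0 :: p) -> trail (d0 :: p) ->
  (exists t, [/\ all U t, trail t, cycle (@adj n) t & d0 \in t]) \/
  (exists d, [/\ path (@adj n) d0 (rcons p d), all U (d0 :: rcons p d) & trail (d0 :: rcons p d)]).
Proof.
move=> Ur Un Ue hp hU ht.
have [hc|hc] := eqVneq (dhead (last d0 p)) (dtail d0).
  left; exists (d0 :: p); split => //; last exact: mem_head.
  by rewrite /= rcons_path hp; apply/eqP.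
right; set w := dhead (last d0 p).
have [d /and3P[Ud /eqP tdw nc]] :
    exists d, [&& U d, dtail d == w & ~~ covered (d0 :: p) d].
  apply/existsP; apply: contraT; rewrite negb_exists => /forallP hall.
  have E1 : #|[pred d | U d && (dtail d == w)]| =
            #|[pred d | (dtail d == w) && covered (d0 :: p) d]|.
    apply: eq_card => d; rewrite !inE; apply/idP/idP.
    - move=> /andP[Ud tw]; move: (hall d); rewrite Ud tw /= negbK => ->.
      done.
    - by move=> /andP[tw cv]; rewrite tw andbT; exact: (covered_U Ur hU cv).
  have := Ue w; rewrite E1 covered_count //.
  have := path_count w hp; rewrite eqxx eq_sym (negbTE hc) => h.
  have -> : count (fun d => dhead d == w) (d0 :: p) =
            (count (fun d => dtail d == w) (d0 :: p)).+1 by move: h => /=; lia.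
  by rewrite addnS /= addnn odd_double.
exists d; split.
- by rewrite rcons_path hp /adj tdw eqxx.
- by rewrite /= all_rcons Ud; move: hU => /= /andP[-> ->].
- by rewrite -rcons_cons; apply: trail_rcons => //; exact: Un.
Qed.

Lemma closed_trail n (U : pred (dart n)) d0 :
  (forall d, U d -> U (drev d)) -> (forall d, U d -> drev d != d) ->
  (forall w, ~~ odd #|[pred d | U d && (dtail d == w)]|) ->
  U d0 -> exists t, [/\ all U t, trail t, cycle (@adj n) t & d0 \in t].
Proof.
move=> Ur Un Ue U0.
suff: forall m p, #|{: dart n}| - size p <= m -> path (@adj n) d0 p ->
    all U (d0 :: p) -> trail (d0 :: p) ->
    exists t, [/\ all U t, trail t, cycle (@adj n) t & d0 \in t].
  move=> H; apply: (H #|{: dart n}| [::]) => //=; first by rewrite subn0.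
    by rewrite U0.
  by rewrite /trail /= inE andbT eq_sym (Un _ U0).
elim=> [|m IH] p hm hp hU ht.
  case: (extend_step Ur Un Ue hp hU ht) => // -[d [_ _ ht']].
  by have := trail_size ht'; rewrite /= size_rcons; lia.
case: (extend_step Ur Un Ue hp hU ht) => // -[d [hp' hU' ht']].
apply: (IH (rcons p d)) => //.
by have := trail_size ht'; rewrite /= size_rcons; lia.
Qed.

Lemma splice0 n (x y : dart n) s t : dtail x = dtail y ->
  cycle (@adj n) (x :: s) -> cycle (@adj n) (y :: t) ->
  cycle (@adj n) (x :: s ++ y :: t).
Proof.
move=> hxy; rewrite /= !rcons_path => /andP[hs /eqP hl1] /andP[ht /eqP hl2].
rewrite cat_path last_cat hs /= ht /adj hl1 hl2 hxy eqxx.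
done.
Qed.

Lemma splice n (s t : seq (dart n)) v : cycle (@adj n) s -> cycle (@adj n) t ->
  trail s -> trail t -> (forall d, d \in t -> ~~ covered s d) ->
  v \in map (@dtail n) s -> v \in map (@dtail n) t ->
  exists u, [/\ cycle (@adj n) u, trail u & perm_eq u (s ++ t)].
Proof.
move=> cs ct ts tt hdis /mapP[x xs ->] /mapP[y yt hv].
case/splitPr: xs cs ts hdis => s1 s2 cs ts hdis.
case/splitPr: yt ct tt hdis hv => t1 t2 ct tt hdis hv.
have pu : perm_eq ((x :: s2 ++ s1) ++ (y :: t2 ++ t1)) ((s1 ++ x :: s2) ++ (t1 ++ y :: t2)).
  by apply: perm_cat; rewrite -cat_cons -rot_size_cat perm_rot.
exists ((x :: s2 ++ s1) ++ (y :: t2 ++ t1)); split => //.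
- rewrite cat_cons; apply: splice0 => //.
    by rewrite -cat_cons -rot_size_cat rot_cycle.
  by rewrite -cat_cons -rot_size_cat rot_cycle.
- set S := s1 ++ x :: s2 in ts hdis pu *; set T := t1 ++ y :: t2 in tt hdis pu *.
  rewrite /trail (perm_uniq (perm_cat pu (perm_map (@drev n) pu))).
  have pm : perm_eq ((S ++ T) ++ map (@drev n) (S ++ T))
                    ((S ++ map (@drev n) S) ++ (T ++ map (@drev n) T)).
    by apply/permP => P; rewrite map_cat !count_cat; lia.
  rewrite /trail in ts tt; rewrite (perm_uniq pm) cat_uniq ts tt andbT /=.
  apply/hasPn => d; rewrite mem_cat => /orP[dt|/mapP[e et ->]].
    exact: hdis.
  have := hdis e et; rewrite -covered_rev; exact.
Qed.

Definition good n (s : seq (dart n)) :=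
  [&& all (@Eb n) s, cycle (@adj n) s, trail s &
      nilp s || ([set: 'I_n] \in map (@dtail n) s)].

Lemma head_tails n (s : seq (dart n)) d : cycle (@adj n) s -> d \in s ->
  dhead d \in map (@dtail n) s.
Proof.
move=> cs ds; have := next_cycle cs ds; rewrite /adj => /eqP ->.
by apply: map_f; rewrite mem_next.
Qed.

Lemma Eb_revI n (d : dart n) : Eb d -> Eb (drev d).
Proof. by rewrite Eb_rev. Qed.

Lemma main_step n' (s : seq (dart n'.+2)) : good s ->
  ~~ [forall d, Eb d ==> covered s d] -> exists u : seq (dart n'.+2), good u /\ size s < size u.
Proof.
move=> /and4P[hE cs ts hh] /forallPn [e]; rewrite negb_imply => /andP[Ee nce].
pose U := [pred d : dart n'.+2 | Eb d && ~~ covered s d].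
have Ur : forall d, U d -> U (drev d).
  by move=> d; rewrite /U /= Eb_rev covered_rev.
have Un : forall d, U d -> drev d != d by move=> d /andP[Ed _]; exact: Eb_neq.
have Ue : forall w, ~~ odd #|[pred d | U d && (dtail d == w)]|.
  move=> w; have := Edeg_even w.
  have -> : #|[pred d : dart n'.+2 | Eb d && (dtail d == w)]| =
     #|[pred d | (dtail d == w) && covered s d]| + #|[pred d | U d && (dtail d == w)]|.
    rewrite -(cardID [pred d | covered s d] [pred d : dart n'.+2 | Eb d && (dtail d == w)]).
    congr (_ + _); apply: eq_card => d; rewrite !inE /=.
      apply/idP/idP => [/andP[/andP[_ ->] ->] //|/andP[-> cv]].
      by rewrite andbT cv (covered_U (@Eb_revI _) hE cv).
    by rewrite /U /=; case: (Eb d); case: (covered s d).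
  by rewrite covered_count // -(cycle_count w cs) addnn oddD odd_double.
have fin : forall d0, U d0 -> dtail d0 \in map (@dtail _) s ->
    exists u : seq (dart n'.+2), good u /\ size s < size u.
  move=> d0 U0 hv; have [t [tU tt ct d0t]] := closed_trail Ur Un Ue U0.
  have hdis : forall d, d \in t -> ~~ covered s d.
    by move/allP: tU => tU d /tU /andP[_ ->].
  have [u [cu tu pu]] := splice cs ct ts tt hdis hv (map_f (@dtail _) d0t).
  exists u; split; last first.
    rewrite (perm_size pu) size_cat; case: t d0t {tU tt ct hdis pu} => //= *.
    by rewrite addnS ltnS leq_addr.
  apply/and4P; split => //.
  - rewrite (perm_all _ pu) all_cat hE /=; apply/allP => d /(allP tU) /andP[] //.
  - have : [set: 'I_n'.+2] \in map (@dtail _) s.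
      have hs : nilp s = false by move: hv; rewrite /nilp; case: (s).
      by rewrite hs in hh.
    case/mapP => x xs ->; apply/orP; right; apply: map_f.
    by rewrite (perm_mem pu) mem_cat xs.
move: e Ee nce => [[[S T] i] j] Ee nce.
pose e' : dart n'.+2 := ([set: 'I_n'.+2], T, i, j).
have Ee' : Eb e'.
  move: Ee => /and5P[h1 h2 h3 h4 h5]; apply/and5P; split => //.
    by apply/set0Pn; exists i; rewrite inE.
  by rewrite inE.
have [ce|nce'] := boolP (covered s e').
  apply: (fin (drev (S, T, i, j))).
    by apply: Ur; rewrite /U /= Ee nce.
  move: ce; rewrite /covered mem_cat => /orP[h|/mapP[x xs hx]].
    exact: (head_tails cs h).
  have hT : dtail x = T by rewrite -[x]drevK -hx.
  by rewrite dtail_rev /= -hT; apply: map_f.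
have U0 : U e' by rewrite /U /= Ee' nce'.
have [hs|hs] := boolP (nilp s).
  have [t [tU tt ct d0t]] := closed_trail Ur Un Ue U0.
  exists t; split; last by move/nilP: hs => ->; case: t d0t {tU tt ct}.
  apply/and4P; split => //.
    by apply/allP => d /(allP tU) /andP[].
  by apply/orP; right; exact: (map_f (@dtail _) d0t).
by apply: fin U0 _; rewrite (negbTE hs) orFb in hh.
Qed.

Lemma main n' : exists s : seq (dart n'.+2),
  good s && [forall d, Eb d ==> covered s d].
Proof.
suff: forall m (s : seq (dart n'.+2)), #|{: dart n'.+2}| - size s <= m -> good s ->
    exists s : seq (dart n'.+2), good s && [forall d, Eb d ==> covered s d].
  by move=> H; apply: (H _ [::]) => //; rewrite subn0.
elim=> [|m IH] s hm gs; have [hall|hn] := boolP [forall d, Eb d ==> covered s d];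
  try by exists s; rewrite gs hall.
  have [u [gu su]] := main_step gs hn.
  by move: gu => /and4P[_ _ /trail_size tu _]; lia.
have [u [gu su]] := main_step gs hn.
apply: (IH u) => //.
by move: gu => /and4P[_ _ /trail_size tu _]; lia.
Qed.

Theorem corollary2p8 (n : nat) : 1 <= n -> fib_set_graph_eulerian n.
Proof.
case: n => [//|[|n']] _.
  exists [::]; split => //.
  move=> [[[A B] i] j] [_ _ _ _ [hij _]]; exfalso; move: hij.
  by rewrite (ord1 i) (ord1 j) eqxx.
have [s /andP[/and4P[hE cs ts _] /forallP hc]] := main n'.
exists s; split => //.
  by move=> d ds; apply/EbP; exact: (allP hE d ds).
move=> d /EbP Ed; have cv := implyP (hc d) Ed.
have h : count_mem (drev d) s = count_mem d (map (@drev _) s).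
  rewrite count_map; apply: eq_count => x /=.
  by apply/eqP/eqP => [->|<-]; rewrite drevK.
by rewrite h -count_cat count_uniq_mem //; rewrite /covered in cv; rewrite cv.
Qed.
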